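(* In the static load balancing game described in the context, suppose that initially each player $i$ uses an action $a_i^0$ with $a_{ij}^0\neq 0$ for all $i\in[n]$, $j\in[m]$. Suppose the players update their actions sequentially, each player exactly once and in any order, each time replacing its action by its (unique) best response to the current actions of the other players, i.e., by the minimizer of $D_i(\cdot,a_{-i})$ over the simplex $A_i$. Then the resulting action profile is a pure Nash equilibrium. In other words, the best-response dynamics converge to a pure Nash equilibrium in $n$ iterations.
   Context: Static load balancing game: there are $m$ servers $[m]$ with service rates $\mu_j>0$ and initial loads $s_j^0\ge 0$, and $n$ players $[n]$; player $i$ holds a job of length $\lambda_i>0$. Player $i$'s action set is $A_i=\{a_i=(a_{i1},\dots,a_{im}):\sum_j a_{ij}=1,\ a_{ij}\ge0\}$, $a_{ij}$ being the fraction of job $i$ placed on server $j$. The cost of player $i$ under profile $a$ is $$D_i(a)=\sum_{j=1}^m \lambda_i a_{ij}\left(\frac{\lambda_i a_{ij}}{2\mu_j}+\frac{s_j^0+\sum_{k\neq i}\lambda_k a_{kj}}{\mu_j}\right),$$ which is strongly convex in $a_i$. A pure Nash equilibrium is a profile $a$ with $D_i(a_i,a_{-i})\le D_i(a_i',a_{-i})$ for all $i$ and $a_i'\in A_i$. *)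

(* Defs.v *)
(* R : realType, players 'I_n, servers 'I_m. *)
From mathcomp Require Import all_boot all_order all_algebra all_fingroup.
From mathcomp Require Import reals.
Set Implicit Arguments. Unset Strict Implicit. Unset Printing Implicit Defensive.
Import Order.TTheory GRing.Theory Num.Theory.
Local Open Scope ring_scope.

Section LB.
Variables (R : realType) (n m : nat).

Definition in_simplex (x : 'I_m -> R) : Prop :=
  (forall j, 0 <= x j) /\ \sum_(j < m) x j = 1.

Definition is_profile (a : 'I_n -> 'I_m -> R) : Prop :=
  forall i, in_simplex (a i).

Definition cost (mu s0 : 'I_m -> R) (lam : 'I_n -> R)
    (a : 'I_n -> 'I_m -> R) (i : 'I_n) : R :=
  \sum_(j < m) lam i * a i j *
     (lam i * a i j / (2 * mu j)
      + (s0 j + \sum_(k < n | k != i) lam k * a k j) / mu j).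

Definition upd (a : 'I_n -> 'I_m -> R) (i : 'I_n) (x : 'I_m -> R)
    : 'I_n -> 'I_m -> R :=
  fun k => if k == i then x else a k.

Definition best_response mu s0 lam (a : 'I_n -> 'I_m -> R) (i : 'I_n)
    (x : 'I_m -> R) : Prop :=
  in_simplex x /\
  forall y, in_simplex y -> cost mu s0 lam (upd a i x) i <= cost mu s0 lam (upd a i y) i.

Definition pure_nash mu s0 lam (a : 'I_n -> 'I_m -> R) : Prop :=
  is_profile a /\
  forall i y, in_simplex y -> cost mu s0 lam a i <= cost mu s0 lam (upd a i y) i.

End LB.

(* Main.v *)
Require Import Defs.
From mathcomp Require Import all_boot all_order all_algebra all_fingroup.
From mathcomp Require Import reals.
From mathcomp Require Import ring lra.
Import Order.TTheory GRing.Theory Num.Theory.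
Local Open Scope ring_scope.

Section Aux.
Variables (R : realType) (n m : nat) (mu s0 : 'I_m -> R) (lam : 'I_n -> R).
Hypothesis mu_gt0 : forall j, 0 < mu j.
Hypothesis lam_gt0 : forall i, 0 < lam i.

Definition Bo (a : 'I_n -> 'I_m -> R) i j := s0 j + \sum_(k < n | k != i) lam k * a k j.
Definition ell (a : 'I_n -> 'I_m -> R) j := (s0 j + \sum_(k < n) lam k * a k j) / mu j.
Definition fc i (B : 'I_m -> R) (y : 'I_m -> R) :=
  \sum_(j < m) lam i * y j * (lam i * y j / (2 * mu j) + B j / mu j).

Lemma cost_upd a i y : cost mu s0 lam (upd a i y) i = fc i (Bo a i) y.
Proof.
rewrite /cost /fc; apply: eq_bigr => j _; rewrite /upd eqxx /Bo.
congr (_ * (_ + (_ + _) / _)); apply: eq_bigr => k /negbTE -> //.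
Qed.

Lemma cost_self a i : cost mu s0 lam a i = fc i (Bo a i) (a i).
Proof. by []. Qed.

Lemma ell_split a i j : ell a j = (lam i * a i j + Bo a i j) / mu j.
Proof. by rewrite /ell /Bo (bigD1 i) //= addrCA. Qed.

Lemma Bo_eq a a' i j : (forall k, k != i -> a k = a' k) -> Bo a i j = Bo a' i j.
Proof. by move=> H; rewrite /Bo; congr (_ + _); apply: eq_bigr => k /H ->. Qed.

Lemma fdiff i B x y : fc i B y - fc i B x =
  lam i * \sum_(j < m) ((lam i * x j + B j) / mu j) * (y j - x j)
  + \sum_(j < m) (lam i) ^+ 2 / (2 * mu j) * (y j - x j) ^+ 2.
Proof.
rewrite /fc -sumrB mulr_sumr -big_split; apply: eq_bigr => j _ /=.
have hm : mu j != 0 by rewrite gt_eqF ?mu_gt0.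
by field; rewrite hm.
Qed.

Lemma sum2 (F : 'I_m -> R) k j : k != j -> (forall q, q != k -> q != j -> F q = 0) ->
  \sum_(q < m) F q = F k + F j.
Proof.
move=> hkj H; rewrite (bigD1 k) //= (bigD1 j) /=; last by rewrite eq_sym hkj.
by rewrite big1 ?addr0 // => q /andP [] hk hj; apply: H.
Qed.

Lemma good_opt i B x : in_simplex x ->
  (forall j k, x j != 0 -> (lam i * x j + B j) / mu j <= (lam i * x k + B k) / mu k) ->
  forall y, in_simplex y -> fc i B x <= fc i B y.
Proof.
move=> [x0 x1] Hg y [y0 y1].
set G := fun j => (lam i * x j + B j) / mu j.
rewrite -subr_ge0 fdiff; apply: addr_ge0; last first.
  apply: sumr_ge0 => j _; apply: mulr_ge0; last exact: sqr_ge0.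
  by apply: divr_ge0; [exact: sqr_ge0 | apply: mulr_ge0; [lra | exact: ltW]].
apply: mulr_ge0; first exact: ltW.
have -> : \sum_(j < m) G j * (y j - x j) =
   \sum_(j < m) \sum_(k < m) y j * x k * (G j - G k).
  transitivity (\sum_(j < m) \sum_(k < m) y j * x k * G j -
                \sum_(j < m) \sum_(k < m) y j * x k * G k); last first.
    by rewrite -sumrB; apply: eq_bigr => j _; rewrite -sumrB; apply: eq_bigr => k _; rewrite mulrBr.
  have -> : \sum_(j < m) \sum_(k < m) y j * x k * G j = \sum_(j < m) G j * y j.
    apply: eq_bigr => j _; rewrite -mulr_suml -mulr_sumr x1; ring.
  rewrite exchange_big /=.
  have -> : \sum_(k < m) \sum_(j < m) y j * x k * G k = \sum_(k < m) G k * x k.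
    apply: eq_bigr => k _; rewrite -mulr_suml -mulr_suml y1; ring.
  by rewrite -sumrB; apply: eq_bigr => j _; rewrite mulrBr.
apply: sumr_ge0 => j _; apply: sumr_ge0 => k _.
have [->|hk] := eqVneq (x k) 0; first by rewrite mulr0 mul0r.
apply: mulr_ge0; first by apply: mulr_ge0.
by rewrite subr_ge0; apply: Hg.
Qed.

Lemma opt_good i B x : in_simplex x ->
  (forall y, in_simplex y -> fc i B x <= fc i B y) ->
  forall j k, x j != 0 -> (lam i * x j + B j) / mu j <= (lam i * x k + B k) / mu k.
Proof.
move=> [x0 x1] Hopt j k hxj.
have [->|hkj] := eqVneq k j; first by [].
set G := fun j => (lam i * x j + B j) / mu j.
rewrite -/(G j) -/(G k).
rewrite leNgt; apply/negP => hlt.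
have xjp : 0 < x j by rewrite lt0r hxj x0.
set c := fun q => (lam i) ^+ 2 / (2 * mu q).
have cge0 : forall q, 0 <= c q.
  by move=> q; apply: divr_ge0; [exact: sqr_ge0 | apply: mulr_ge0; [lra | exact: ltW]].
set A := lam i * x j * (G j - G k).
set Q := (c k + c j) * x j ^+ 2.
have Ap : 0 < A by rewrite /A; apply: mulr_gt0; [apply: mulr_gt0 | rewrite subr_gt0].
have Qge : 0 <= Q by apply: mulr_ge0; [apply: addr_ge0 | exact: sqr_ge0].
set e := A / (A + Q).
have AQ : 0 < A + Q by lra.
have ep : 0 < e by apply: divr_gt0.
have eAQ : e * (A + Q) = A by rewrite /e mulfVK // gt_eqF.
have e1 : e <= 1.
  have : e * (A + Q) <= 1 * (A + Q) by rewrite eAQ mul1r; lra.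
  by rewrite ler_pM2r.
set d := fun q => if q == k then x j else if q == j then - x j else 0.
set y := fun q => x q + e * d q.
have yx : forall q, y q - x q = e * d q by move=> q; rewrite /y addrAC subrr add0r.
have dz : forall q, q != k -> q != j -> d q = 0.
  by move=> q /negbTE hk /negbTE hj; rewrite /d hk hj.
have dk : d k = x j by rewrite /d eqxx.
have dj : d j = - x j by rewrite /d eqxx eq_sym (negbTE hkj).
have ys : in_simplex y.
  split.
    move=> q; rewrite /y /d; case: ifP => _.
      by apply: addr_ge0 => //; apply: mulr_ge0; [exact: ltW|].
    case: ifP => [/eqP ->|_]; last by rewrite mulr0 addr0.
    have : e * x j <= 1 * x j by rewrite ler_pM2r.
    lra.
  have -> : \sum_(q < m) y q = \sum_(q < m) x q + \sum_(q < m) (y q - x q).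
    by rewrite -big_split; apply: eq_bigr => q _; rewrite [RHS]addrC subrK.
  rewrite x1 (sum2 _ _ _ hkj); last by move=> q hk hj; rewrite yx dz // mulr0.
  by rewrite !yx dk dj; lra.
have := Hopt y ys; rewrite -subr_ge0 fdiff.
rewrite (sum2 _ _ _ hkj); last by move=> q hk hj; rewrite /= yx dz // !mulr0.
rewrite (sum2 (fun q => c q * (y q - x q) ^+ 2) _ _ hkj); last first.
  by move=> q hk hj; rewrite /= yx dz // mulr0 expr0n mulr0.
rewrite /= !yx dk dj -/(c k) -/(c j).
have -> : lam i * (G k * (e * x j) + G j * (e * - x j)) +
   (c k * (e * x j) ^+ 2 + c j * (e * - x j) ^+ 2) = - e * A + e * (e * Q).
  rewrite /A /Q; ring.
have -> : e * Q = A - e * A by lra.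
have : 0 < e * (e * A) by apply: mulr_gt0 => //; apply: mulr_gt0.
lra.
Qed.

Lemma keep i (B xo xn : 'I_m -> R) j0 :
  (forall q, 0 < xo q) -> in_simplex xo -> in_simplex xn ->
  (forall q q', xn q != 0 -> (lam i * xn q + B q) / mu q <= (lam i * xn q' + B q') / mu q') ->
  (forall q, (lam i * xo j0 + B j0) / mu j0 <= (lam i * xo q + B q) / mu q) ->
  forall j', (lam i * xn j0 + B j0) / mu j0 <= (lam i * xn j' + B j') / mu j'.
Proof.
move=> xop [_ xo1] [xn0 xn1] Hn Ho j'.
have [hz|hnz] := eqVneq (xn j0) 0; last exact: Hn.
rewrite leNgt; apply/negP => hlt.
have key : forall q, xn q < xo q.
  move=> q; have [->|hq] := eqVneq (xn q) 0; first exact: xop.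
  have h1 := Hn q j' hq.
  have h2 : (lam i * xn j0 + B j0) / mu j0 < (lam i * xo j0 + B j0) / mu j0.
    rewrite ltr_pM2r ?invr_gt0 // ltrD2r ltr_pM2l //.
    by rewrite hz.
  have h3 := Ho q.
  have : (lam i * xn q + B q) / mu q < (lam i * xo q + B q) / mu q.
    by apply: (le_lt_trans h1); apply: (lt_trans hlt); apply: (lt_le_trans h2).
  by rewrite ltr_pM2r ?invr_gt0 // ltrD2r ltr_pM2l.
have : \sum_(q < m) xn q < \sum_(q < m) xo q.
  apply: ltr_sum => //; apply/hasP; exists j0 => //; exact: mem_index_enum.
by rewrite xn1 xo1 ltxx.
Qed.

Definition good (a : 'I_n -> 'I_m -> R) i :=
  forall j j', a i j != 0 -> ell a j <= ell a j'.

Lemma main (a0 : 'I_n -> 'I_m -> R) (sigma : 'S_n)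
    (P : nat -> 'I_n -> 'I_m -> R) :
  is_profile a0 ->
  (forall i j, a0 i j != 0) ->
  P 0%N = a0 ->
  (forall k : 'I_n,
     best_response mu s0 lam (P k) (sigma k) (P k.+1 (sigma k)) /\
     (forall i, i != sigma k -> P k.+1 i = P k i)) ->
  pure_nash mu s0 lam (P n).
Proof.
move=> Hprof Ha0 HP0 Hstep.
have a0p : forall i j, 0 < a0 i j.
  by move=> i j; rewrite lt0r Ha0; case: (Hprof i) => h _; rewrite h.
have Inv : forall k, (k <= n)%N ->
  (forall i, in_simplex (P k i)) /\
  (forall i, (exists k' : 'I_n, (k' < k)%N /\ sigma k' = i) -> good (P k) i) /\
  (forall i, (forall k' : 'I_n, (k' < k)%N -> sigma k' != i) -> P k i = a0 i).
  elim=> [_|k IH hk].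
    rewrite HP0; split; first exact: Hprof.
    by split=> // i [k' []].
  have hkn : (k < n)%N by [].
  have [Hs [Hg Hu]] := IH (ltnW hk).
  set ko : 'I_n := Ordinal hkn.
  have [[Hsx Hbr] Hoth] := Hstep ko.
  set p := sigma ko. set x := P k.+1 p.
  have Hpu : P k p = a0 p.
    apply: Hu => k' hk'; rewrite /p; apply/negP => /eqP /perm_inj hh.
    by move: hk'; rewrite hh /= ltnn.
  have HBo : forall j, Bo (P k.+1) p j = Bo (P k) p j.
    by move=> j; apply: Bo_eq => q hq; apply: Hoth.
  have ellN : forall j, ell (P k.+1) j = (lam p * x j + Bo (P k) p j) / mu j.
    by move=> j; rewrite (ell_split _ p) HBo.
  have ellO : forall j, ell (P k) j = (lam p * a0 p j + Bo (P k) p j) / mu j.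
    by move=> j; rewrite (ell_split _ p) Hpu.
  have goodp : good (P k.+1) p.
    move=> j j' hj; rewrite !ellN; apply: (@opt_good p (Bo (P k) p) x Hsx _ j j' hj) => y hy.
    by rewrite -!cost_upd; apply: Hbr.
  split.
    by move=> i; have [->|hi] := eqVneq i p; [exact: Hsx | rewrite Hoth //; exact: Hs].
  split.
    move=> i [k' [hk' hk'i]].
    have [->|hip] := eqVneq i p; first exact: goodp.
    have hk'k : (k' < k)%N.
      have hne : (nat_of_ord k') != k.
        apply/eqP => hh; move: hip; rewrite -hk'i /p (_ : k' = ko) ?eqxx //.
        exact: val_inj.
      by rewrite ltn_neqAle hne -ltnS.
    move=> j j'; rewrite Hoth // => hj.
    have Hgi := Hg i (ex_intro _ k' (conj hk'k hk'i)) j.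
    rewrite !ellN; apply: (@keep p (Bo (P k) p) (a0 p) x j (a0p p)).
    - by rewrite -Hpu.
    - exact: Hsx.
    - by move=> q q' hq; rewrite -!ellN; apply: goodp.
    - by move=> q; rewrite -!ellO; apply: Hgi.
  move=> i Hi.
  have hip : i != p by rewrite eq_sym; apply: Hi.
  rewrite Hoth //; apply: Hu => k' hk'; apply: Hi; exact: ltnW.
have [Hs [Hg _]] := Inv n (leqnn n).
split; first exact: Hs.
move=> i y hy; rewrite cost_self cost_upd.
apply: good_opt => //.
move=> j k hj; rewrite -!ell_split; apply: (Hg i _ j k hj).
exists (perm_inv sigma i); split; first exact: ltn_ord.
by rewrite permKV.
Qed.

End Aux.

Theorem theorem2 (R : realType) (n m : nat)
    (mu s0 : 'I_m -> R) (lam : 'I_n -> R)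
    (a0 : 'I_n -> 'I_m -> R) (sigma : 'S_n)
    (P : nat -> 'I_n -> 'I_m -> R) :
  (forall j, 0 < mu j) ->
  (forall j, 0 <= s0 j) ->
  (forall i, 0 < lam i) ->
  is_profile a0 ->
  (forall i j, a0 i j != 0) ->
  P 0%N = a0 ->
  (forall k : 'I_n,
     best_response mu s0 lam (P k) (sigma k) (P k.+1 (sigma k)) /\
     (forall i, i != sigma k -> P k.+1 i = P k i)) ->
  pure_nash mu s0 lam (P n).
Proof.
move=> Hmu _ Hlam; exact: main.
Qed.
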